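(* Assume that (A1) $\mu_k\sim 1/k^2$, (A2) $\nabla L$ is $M$-Lipschitz, i.e. $\|\nabla L(x)-\nabla L(y)\|\le M\|x-y\|$ for all $x,y\in\mathcal H$, and that either (i) $\lambda>M\mu_0$, or (ii) there is $B>0$ with $\|\nabla L(x)\|\le B$ for all $x\in\mathcal H$. Then there exist constants $m,c>0$ such that $$\forall x\in\mathcal H,\qquad \langle Ax-\nabla L(x),x\rangle\le -m\|x\|^2+c .$$
   Context: Let $\mathcal H$ be a separable real Hilbert space with inner product $\langle\cdot,\cdot\rangle$, norm $\|\cdot\|$, and orthonormal basis $(f_k)_{k\ge0}$, and let $\mu_0\ge\mu_1\ge\cdots>0$ (the eigenvalues of the integral operator of a kernel $K$, with eigenfunctions $f_k$). The RKHS is $\mathcal H_K=\{\sum_k\alpha_kf_k:\sum_k\alpha_k^2/\mu_k<\infty\}$ with $\|\sum_k\alpha_kf_k\|_{\mathcal H_K}^2=\sum_k\alpha_k^2/\mu_k$. Fix $\lambda>0$ and let $A$ be the unbounded diagonal operator $Af_k=-(\lambda/\mu_k)f_k$ (i.e. $A=-\frac\lambda2\nabla\|\cdot\|_{\mathcal H_K}^2$), with the inequality understood for $x$ in its domain. $L:\mathcal H\to\mathbb R$ is Fréchet differentiable with gradient $\nabla L$ (Riesz representer of the Fréchet derivative) and admits a global minimizer $x^*$. *)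

(* Defs.v *)
From HB Require Import structures.
From mathcomp Require Import all_boot all_order all_algebra.
From mathcomp Require Import all_classical all_reals all_analysis.
Set Implicit Arguments. Unset Strict Implicit. Unset Printing Implicit Defensive.
Import Order.TTheory GRing.Theory Num.Theory.
Import numFieldNormedType.Exports.
Local Open Scope classical_set_scope.
Local Open Scope ring_scope.

Definition is_inner_product {R : realType} {V : normedModType R}
  (ip : V -> V -> R) : Prop :=
  (forall x y, ip x y = ip y x) /\
  (forall (a : R) (x y z : V), ip (a *: x + y) z = a * ip x z + ip y z) /\
  (forall x, ip x x = `|x| ^+ 2).

Definition is_ONB {R : realType} {V : normedModType R}
  (ip : V -> V -> R) (f : nat -> V) : Prop :=
  (forall i j : nat, ip (f i) (f j) = (i == j)%:R) /\
  (forall x : V, (fun n : nat => \sum_(k < n) ip x (f k) *: f k) @ \oo --> x).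

Definition A_partial {R : realType} {V : normedModType R}
  (ip : V -> V -> R) (f : nat -> V) (mu : nat -> R) (lam : R) (x : V) :
  nat -> V :=
  fun n => \sum_(k < n) (- (lam / mu k) * ip x (f k)) *: f k.

(* Domain of the unbounded diagonal operator A: the defining series converges. *)
Definition A_dom {R : realType} {V : normedModType R}
  (ip : V -> V -> R) (f : nat -> V) (mu : nat -> R) (lam : R) (x : V) : Prop :=
  cvg (A_partial ip f mu lam x @ \oo).

(* A x, the limit of the series (meaningful on A_dom). *)
Definition A_op {R : realType} {V : normedModType R}
  (ip : V -> V -> R) (f : nat -> V) (mu : nat -> R) (lam : R) (x : V) : V :=
  lim (A_partial ip f mu lam x @ \oo).

(* Main.v *)
Require Import Defs.
From HB Require Import structures.
From mathcomp Require Import all_boot all_order all_algebra.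
From mathcomp Require Import all_classical all_reals all_analysis.
From mathcomp Require Import ring lra.
Import Order.TTheory GRing.Theory Num.Theory.
Import numFieldNormedType.Exports.
Local Open Scope classical_set_scope.
Local Open Scope ring_scope.

Section Aux.
Context {R : realType} {H : normedModType R} {ip : H -> H -> R}.
Hypothesis hip : is_inner_product ip.

Lemma ip_sym x y : ip x y = ip y x.
Proof. by case: hip. Qed.

Lemma ip_lin a x y z : ip (a *: x + y) z = a * ip x z + ip y z.
Proof. by case: hip => _ []. Qed.

Lemma ip_norm x : ip x x = `|x| ^+ 2.
Proof. by case: hip => _ []. Qed.

Lemma ip0l z : ip 0 z = 0.
Proof.
have := ip_lin 1 0 0 z; rewrite scaler0 addr0 mul1r => h.
lra.
Qed.

Lemma ipD x y z : ip (x + y) z = ip x z + ip y z.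
Proof. by have := ip_lin 1 x y z; rewrite scale1r mul1r. Qed.

Lemma ipB x y z : ip (x - y) z = ip x z - ip y z.
Proof.
have := ip_lin (-1) y x z; rewrite scaleN1r addrC => ->; lra.
Qed.

Lemma ipZ a x z : ip (a *: x) z = a * ip x z.
Proof. by have := ip_lin a x 0 z; rewrite addr0 ip0l addr0. Qed.

Lemma ip_expand t u x :
  ip (t *: u + x) (t *: u + x) = t ^+ 2 * ip u u + 2 * t * ip u x + ip x x.
Proof.
rewrite ip_lin [ip x _]ip_sym ip_lin [ip u _]ip_sym ip_lin.
rewrite [ip x u]ip_sym; lra.
Qed.

Lemma ip_CS u x : `|ip u x| <= `|u| * `|x|.
Proof.
have [u0|unz] := eqVneq u 0.
  by rewrite u0 ip0l !normr0 mul0r.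
have nu : 0 < `|u| by rewrite normr_gt0.
set p := ip u x.
have h := ip_expand (- p / `|u| ^+ 2) u x.
rewrite !ip_norm in h.
have hq : 0 <= `|- p / `|u| ^+ 2 *: u + x| ^+ 2 by apply: sqr_ge0.
rewrite h -/p in hq.
have hsq : p ^+ 2 <= (`|u| * `|x|) ^+ 2.
  have u2 : 0 < `|u| ^+ 2 by apply: exprn_gt0.
  have e : (- p / `|u| ^+ 2) ^+ 2 * `|u| ^+ 2 + 2 * (- p / `|u| ^+ 2) * p
           = - (p ^+ 2 / `|u| ^+ 2).
    field; by rewrite lt0r_neq0.
  rewrite e in hq.
  have : p ^+ 2 / `|u| ^+ 2 <= `|x| ^+ 2 by lra.
  by rewrite ler_pdivrMr // exprMn mulrC.
rewrite -real_normK in hsq; last by apply: num_real.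
by rewrite -(ler_pXn2r (n:=2)) // ?nnegrE ?mulr_ge0.
Qed.

Lemma ip_sum n (c : nat -> R) (f : nat -> H) x :
  ip (\sum_(k < n) c k *: f k) x = \sum_(k < n) c k * ip (f k) x.
Proof.
elim: n => [|n IH]; first by rewrite !big_ord0 ip0l.
by rewrite !big_ord_recr /= ipD IH ipZ.
Qed.

Lemma ip_cvg (u : nat -> H) l x :
  u @ \oo --> l -> (fun n => ip (u n) x) @ \oo --> ip l x.
Proof.
move=> /cvgrPdist_lt hu; apply/cvgrPdist_lt => e e0.
have ex0 : 0 < `|x| + 1 by rewrite ltr_pwDr.
have := hu (e / (`|x| + 1)) (divr_gt0 e0 ex0).
apply: filterS => n hn.
rewrite -ipB.
apply: (le_lt_trans (ip_CS _ _)).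
have hx : `|x| <= `|x| + 1 by lra.
have : `|l - u n| * `|x| <= `|l - u n| * (`|x| + 1) by rewrite ler_wpM2l.
move/le_lt_trans; apply.
by rewrite -ltr_pdivlMr.
Qed.

End Aux.

Theorem proposition1 (R : realType) (H : completeNormedModType R)
  (ip : H -> H -> R) (f : nat -> H) (mu : nat -> R) (lam : R)
  (L : H -> R) (gradL : H -> H) (M : R) :
  is_inner_product ip ->
  is_ONB ip f ->
  (forall k, 0 < mu k) ->
  (forall k, mu k.+1 <= mu k) ->
  0 < lam ->
  (forall x, differentiable L x) ->
  (forall x v, 'd L x v = ip (gradL x) v) ->
  (exists xstar, forall x, L xstar <= L x) ->
  (* (A1) mu_k ~ 1/k^2 *)
  (exists c1 c2 : R, 0 < c1 /\ 0 < c2 /\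
     forall k : nat, (0 < k)%N ->
       c1 / (k%:R ^+ 2) <= mu k /\ mu k <= c2 / (k%:R ^+ 2)) ->
  (* (A2) gradL is M-Lipschitz *)
  (forall x y, `|gradL x - gradL y| <= M * `|x - y|) ->
  (* (i) or (ii) *)
  (M * mu 0%N < lam \/ exists B : R, 0 < B /\ forall x, `|gradL x| <= B) ->
  exists m c : R, 0 < m /\ 0 < c /\
    forall x, A_dom ip f mu lam x ->
      ip (A_op ip f mu lam x - gradL x) x <= - m * `|x| ^+ 2 + c.
Proof.
move=> hip [_ hONB] mupos mudec lampos _ _ _ _ hlip hcase.
have mule : forall k, mu k <= mu 0%N.
  elim=> [|k IH]; first by [].
  exact: le_trans (mudec k) IH.
set a := lam / mu 0%N.
have a0 : 0 < a by rewrite divr_gt0.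
have hA : forall x, A_dom ip f mu lam x ->
    ip (A_op ip f mu lam x) x <= - a * `|x| ^+ 2.
  move=> x hx.
  have c1 := @ip_cvg _ _ _ hip _ _ x hx.
  have c2 := @ip_cvg _ _ _ hip _ _ x (hONB x).
  have c3 := cvgD c1 (@cvgMl_tmp _ _ _ _ _ a _ c2).
  suff : ip (A_op ip f mu lam x) x + a * ip x x <= 0.
    by rewrite ip_norm //; lra.
  have := cvgr_to_le (c3 _ _) (b:=0). rewrite /A_op. move=> hh; apply: hh; near=> n => /=.
  change (ip (A_partial ip f mu lam x n) x + a * ip (\sum_(k < n) ip x (f k) *: f k) x <= 0).
  rewrite /A_partial (ip_sum hip n (fun k => - (lam / mu k) * ip x (f k)) f x) (ip_sum hip n (fun k => ip x (f k)) f x) big_distrr /= -big_split /=.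
  apply: sumr_le0 => i _.
  rewrite [ip (f i) x](ip_sym hip).
  have hq : 0 <= ip x (f i) * ip x (f i) by rewrite -expr2 sqr_ge0.
  have hmu : a <= lam / mu i.
    rewrite /a ler_pM2l // lef_pV2 ?posrE //.
  nra.
have key : forall G K, 0 <= G -> K < a -> (forall x, `|gradL x| <= G + K * `|x|) ->
    exists m c : R, 0 < m /\ 0 < c /\
    forall x, A_dom ip f mu lam x ->
      ip (A_op ip f mu lam x - gradL x) x <= - m * `|x| ^+ 2 + c.
  move=> G K G0 Ka hg.
  set d := a - K.
  have d0 : 0 < d by rewrite /d subr_gt0.
  exists (d / 2), (G ^+ 2 / (2 * d) + 1); split; first by rewrite divr_gt0.
  split.
    have : 0 <= G ^+ 2 / (2 * d) by rewrite divr_ge0 ?sqr_ge0 // mulr_ge0 // ltW.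
    lra.
  move=> x hx.
  rewrite ipB //.
  have h1 := hA x hx.
  have h2 : - ip (gradL x) x <= `|gradL x| * `|x|.
    have := ip_CS hip (gradL x) x; rewrite ler_norml; lra.
  have h3 : `|gradL x| * `|x| <= (G + K * `|x|) * `|x|.
    by rewrite ler_wpM2r.
  set e := G ^+ 2 / (2 * d).
  have he : e * (2 * d) = G ^+ 2.
    rewrite /e mulfVK //; lra.
  set nx := `|x|.
  have hsq : 0 <= (d * nx - G) ^+ 2 by apply: sqr_ge0.
  have nx0 : 0 <= nx by exact: normr_ge0.
  have : - d * nx ^+ 2 + G * nx <= - (d / 2) * nx ^+ 2 + e + 1.
    have : (- d * nx ^+ 2 + G * nx) * (2 * d) <= (- (d / 2) * nx ^+ 2 + e + 1) * (2 * d).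
      nra.
    by rewrite ler_pM2r //; lra.
  have e1 : (G + K * nx) * nx = G * nx + K * nx ^+ 2 by rewrite expr2; ring.
  have e2 : - d * nx ^+ 2 = - a * nx ^+ 2 + K * nx ^+ 2 by rewrite /d; ring.
  move=> hfin; move: h1 h2 h3; rewrite -/nx => h1 h2 h3; lra.
case: hcase => [hM | [B [B0 hB]]].
- apply: (key (`|gradL 0| + 0) M); first by rewrite addr0.
  + by rewrite /a ltr_pdivlMr.
  + move=> x; have := hlip x 0; rewrite subr0 addr0.
    have := ler_normD (gradL x - gradL 0) (gradL 0); rewrite subrK; lra.
- apply: (key B 0); [exact: ltW | by [] |].
  by move=> x; rewrite mul0r addr0.
Unshelve. all: by end_near.
Qed.
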